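(* Let $G$ be an unweighted digraph without loops and $M(t)$ its directed deformed graph Laplacian. Then $1$ is always an eigenvalue of $M(t)$, and its geometric multiplicity equals the number of connected components of the undirected part $G_U$ of $G$. Moreover, $-1$ is an eigenvalue of $M(t)$ if and only if $G_U$ has at least one bipartite connected component, and in that case its geometric multiplicity equals the number of bipartite connected components of $G_U$.
   Context: A digraph $G=(V,E)$, no loops or multiple edges, adjacency matrix $A$; $S=A\circ A^T$, $D=\mathrm{diag}(\mathrm{diag}(A^2))$; $M(t)=I-At+(D-I)t^2+(A-S)t^3$. The undirected part $G_U$ of $G$ is the undirected graph on $V$ whose edges are the pairs $\{i,j\}$ with both $(i,j),(j,i)\in E$ (adjacency matrix $S$); an isolated vertex of $G_U$ counts as a (bipartite) connected component. The geometric multiplicity of an eigenvalue $\lambda$ of $M(t)$ is $\dim\ker M(\lambda)$. *)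

(* Defs.v *)
From HB Require Import structures.
From mathcomp Require Import all_boot all_order all_algebra.
Set Implicit Arguments. Unset Strict Implicit. Unset Printing Implicit Defensive.
Import Order.TTheory GRing.Theory Num.Theory.
Local Open Scope ring_scope.

(* A digraph on vertex set 'I_n is given by its edge relation E : rel 'I_n
   ((i,j) is an edge iff E i j); no multiple edges by construction,
   no loops is a hypothesis of the theorem. *)

Section Defs.
Variables (R : numFieldType) (n : nat).

Definition adjmx (E : rel 'I_n) : 'M[R]_n := \matrix_(i, j) (E i j)%:R.

Definition Smx (A : 'M[R]_n) : 'M[R]_n := \matrix_(i, j) (A i j * A^T i j).

Definition Dmx (A : 'M[R]_n) : 'M[R]_n := diag_mx (\row_i ((A *m A) i i)).

Definition deformed_lap (A : 'M[R]_n) (t : R) : 'M[R]_n :=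
  1%:M - t *: A + t ^+ 2 *: (Dmx A - 1%:M) + t ^+ 3 *: (A - Smx A).

Definition mxpoly_eigenvalue (M : R -> 'M[R]_n) (l : R) : Prop :=
  \det (M l) = 0.

(* geometric multiplicity: dim ker M(lambda), the kernel being
   {v | M(lambda) v = 0} = {v^T | v^T M(lambda)^T = 0} (kermx is the row kernel) *)
Definition geom_mult (M : R -> 'M[R]_n) (l : R) : nat :=
  \rank (kermx (M l)^T).
End Defs.

Definition undir_part n (E : rel 'I_n) : rel 'I_n := fun i j => E i j && E j i.

Definition num_components n (U : rel 'I_n) : nat := n_comp U predT.

Definition bipartite_component n (U : rel 'I_n) (r : 'I_n) : bool :=
  [exists c : {ffun 'I_n -> bool},
     [forall x, forall y, (connect U r x && U x y) ==> (c x != c y)]].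

Definition num_bipartite_components n (U : rel 'I_n) : nat :=
  #|[set r | (r \in roots U) && bipartite_component U r]|.

(* Main.v *)
Require Import Defs.
From mathcomp Require Import all_boot all_order all_algebra.
From mathcomp Require Import ring lra.
Import GRing.Theory Num.Theory.
Set Printing Width 150.
Local Open Scope ring_scope.

Lemma sum_sel (F : nzRingType) n (f : 'I_n -> F) (a : 'I_n) :
  \sum_i f i * (i == a)%:R = f a.
Proof.
rewrite (bigD1 a) //= eqxx mulr1 big1 ?addr0 // => i /negPf->; by rewrite mulr0.
Qed.

Lemma rank_ker_sel (F : fieldType) n (L : 'M[F]_n) (S : {set 'I_n})
  (B : 'M[F]_(#|S|, n)) :
  B *m L = 0 -> (forall k k' : 'I_#|S|, B k (enum_val k') = (k == k')%:R) ->
  (forall v : 'rV[F]_n, v *m L = 0 -> (forall r, r \in S -> v 0 r = 0) -> v = 0) ->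
  \rank (kermx L) = #|S|.
Proof.
move=> BL Bsel Hinj.
pose P : 'M[F]_(n, #|S|) := \matrix_(i, k) (i == enum_val k)%:R.
have vP : forall m (v : 'M[F]_(m, n)) i k, (v *m P) i k = v i (enum_val k).
  by move=> m v i k; rewrite mxE; under eq_bigr do rewrite mxE; rewrite sum_sel.
apply/eqP; rewrite eqn_leq; apply/andP; split.
  rewrite -(mxrank_mul_ker (kermx L) P).
  have -> : \rank (kermx L :&: kermx P)%MS = 0%N.
    apply/eqP; rewrite mxrank_eq0; apply/rowV0P => v.
    rewrite sub_capmx !sub_kermx => /andP[/eqP vL /eqP vP0].
    apply: Hinj => // r rS.
    have := vP _ v 0 (enum_rank_in rS r); rewrite vP0 enum_rankK_in // mxE.
    by move<-.
  by rewrite addn0 rank_leq_col.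
have BK : (B <= kermx L)%MS by rewrite sub_kermx BL.
apply: leq_trans (mxrankS BK).
have e1 : \rank (B *m P) = #|S|.
  have -> : B *m P = 1%:M by apply/matrixP => k k'; rewrite vP Bsel !mxE.
  exact: mxrank1.
by rewrite -{1}e1 mxrankM_maxl.
Qed.

Definition degU (F : nzRingType) n (U : rel 'I_n) (i : 'I_n) : F := \sum_k (U i k)%:R.
Definition LapU (F : nzRingType) n (U : rel 'I_n) (s : F) : 'M[F]_n :=
  \matrix_(i, j) ((i == j)%:R * degU F n U i + s * (U i j)%:R).

Section Quad.
Variables (F : realFieldType) (n : nat) (U : rel 'I_n).
Hypothesis Usym : symmetric U.
Local Notation degU := (@degU F n U).
Local Notation LapU := (@LapU F n U).

Lemma LapU_ker (s : F) (v : 'rV[F]_n) : s * s = 1 -> v *m LapU s = 0 ->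
  forall i j, U i j -> v 0 i + s * v 0 j = 0.
Proof.
move=> ss vL.
pose u i j : F := (U i j)%:R.
have usym : forall i j, u i j = u j i by move=> i j; rewrite /u Usym.
have col : forall j, (v *m LapU s) 0 j = v 0 j * degU j + s * \sum_i u i j * v 0 i.
  move=> j; rewrite mxE; under eq_bigr do rewrite mxE.
  rewrite (eq_bigr (fun i => v 0 i * (i == j)%:R * degU i + s * (u i j * v 0 i))); last first.
    move=> i _; rewrite /u; move: ((i == j)%:R) ((U i j)%:R) (degU i) => x y z; ring.
  rewrite big_split /=; congr (_ + _); last by rewrite mulr_sumr.
  rewrite (bigD1 j) //= eqxx mulr1 big1 ?addr0 // => i /negPf->; by rewrite mulr0 mul0r.
pose Q := \sum_j v 0 j * (v *m LapU s) 0 j.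
have Q0 : Q = 0 by rewrite /Q big1 // => j _; rewrite vL mxE mulr0.
pose A1 := \sum_i v 0 i ^+ 2 * degU i.
pose A3 := \sum_i \sum_j s * u i j * v 0 i * v 0 j.
have eQL : Q = A1 + A3.
  rewrite /Q /A3 (exchange_big _ _ _ _ _ (fun i j => s * u i j * v 0 i * v 0 j)) /=.
  rewrite -big_split /=; apply: eq_bigr => j _.
  rewrite col mulrDr mulrA -expr2 mulr_sumr mulr_sumr; f_equal.
  apply: eq_bigr => i _; rewrite /u; move: ((U i j)%:R) => x; ring.
have eQ : Q *+ 2 = \sum_i \sum_j u i j * (v 0 i + s * v 0 j) ^+ 2.
  rewrite (eq_bigr (fun i => \sum_j (u i j * v 0 i ^+ 2 + u i j * v 0 j ^+ 2)
                     + (\sum_j (s * u i j * v 0 i * v 0 j)) *+ 2)); last first.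
    move=> i _; rewrite -sumrMnl -big_split /=; apply: eq_bigr => j _.
    rewrite /u; move: ((U i j)%:R) => x.
    have -> : (v 0 i + s * v 0 j) ^+ 2 = v 0 i ^+ 2 + (s * s) * v 0 j ^+ 2 + (s * v 0 i * v 0 j) *+ 2 by ring.
    rewrite ss; ring.
  rewrite big_split /= sumrMnl eQL mulrnDl; f_equal.
  under eq_bigr do rewrite big_split /=.
  rewrite big_split /=.
  rewrite (exchange_big _ _ _ _ _ (fun i j => u i j * v 0 j ^+ 2)) /=.
  rewrite mulr2n; f_equal; apply: eq_bigr => i _; rewrite /degU mulr_sumr; apply: eq_bigr => j _.
    rewrite /u; move: ((U _ _)%:R) => x; ring.
  rewrite [u j i]usym /u; move: ((U _ _)%:R) => x; ring.
have Hsum : \sum_i \sum_j u i j * (v 0 i + s * v 0 j) ^+ 2 = 0 by rewrite -eQ Q0 mul0rn.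
have nn : forall i j, 0 <= u i j * (v 0 i + s * v 0 j) ^+ 2.
  by move=> i j; rewrite mulr_ge0 ?ler0n ?sqr_ge0.
move=> i j Uij.
have H1 := psumr_eq0P (fun i _ => sumr_ge0 _ (fun j _ => nn i j)) Hsum (i:=i) isT.
have := psumr_eq0P (fun j _ => nn i j) H1 (i:=j) isT.
by rewrite /u Uij mul1r => /eqP; rewrite sqrf_eq0 => /eqP.
Qed.
End Quad.

Section Graph.
Variables (F : realFieldType) (n : nat) (U : rel 'I_n).
Hypothesis Usym : symmetric U.
Let csym := sym_connect_sym Usym.
Local Notation rt := (fingraph.root U).

Lemma U_rt i j : U i j -> rt i = rt j.
Proof. by move=> Uij; apply/(fingraph.rootP csym)/connect1. Qed.

Lemma deg_sym j : @degU F n U j = \sum_i (U i j)%:R.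
Proof. by apply: eq_bigr => i _; rewrite Usym. Qed.

Lemma path_const (f : 'I_n -> F) : (forall i j, U i j -> f i = f j) ->
  forall x y, connect U x y -> f x = f y.
Proof.
move=> H x y /connectP[p pth ->]; elim: p x pth => //= z p IH x /andP[Uxz pth].
by rewrite (H _ _ Uxz) IH.
Qed.

Lemma path_sign (f : 'I_n -> F) : (forall i j, U i j -> f j = - f i) ->
  forall x y, connect U x y -> f y = f x \/ f y = - f x.
Proof.
move=> H x y /connectP[p pth ->]; elim: p x pth => /= [|z p IH] x; first by left.
case/andP=> Uxz pth; have := IH z pth; rewrite (H _ _ Uxz) opprK; tauto.
Qed.

Lemma rt_in (r : 'I_n) : r \in roots U -> rt r = r.
Proof. by move/eqP. Qed.

Lemma lap_rank : \rank (kermx (@LapU F n U (-1))) = #|[set r | r \in roots U]|.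
Proof.
set S := [set r | r \in roots U].
pose B : 'M[F]_(#|S|, n) := \matrix_(k, i) (rt i == enum_val k)%:R.
apply: (@rank_ker_sel _ _ _ S B).
- apply/matrixP => k j; rewrite !mxE.
  under eq_bigr do rewrite !mxE mulrDr.
  rewrite big_split /= (bigD1 j) //= eqxx mul1r big1 ?addr0; last first.
    by move=> i /negPf->; rewrite mul0r mulr0.
  rewrite deg_sym mulr_sumr -big_split big1 // => i _.
  case Uij: (U i j); last by rewrite /= !(mulr0, mul0r, mulr0n, oppr0, addr0).
  by rewrite (U_rt _ _ Uij) /= !mulr1 mulrN1 addrN.
- move=> k k'; rewrite mxE.
  have := enum_valP k'; rewrite inE => /rt_in ->.
  by rewrite (inj_eq enum_val_inj) eq_sym.
- move=> v vL vS; apply/matrixP => i j; rewrite (ord1 i) mxE.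
  have H := @LapU_ker F n U Usym (-1) v ltac:(by rewrite mulrNN mulr1) vL.
  have Hc : forall a b, U a b -> v 0 a = v 0 b.
    by move=> a b Uab; have := H a b Uab; rewrite mulN1r => /eqP; rewrite subr_eq0 => /eqP.
  rewrite (@path_const (v 0) Hc _ _ (connect_root U j)) vS // inE; apply/eqP; exact: root_root.
Qed.

Definition colr (r : 'I_n) : {ffun 'I_n -> bool} :=
  odflt [ffun => false]
    [pick c : {ffun 'I_n -> bool} | [forall x, forall y, (connect U r x && U x y) ==> (c x != c y)]].

Lemma colP r : bipartite_component U r -> forall x y, connect U r x -> U x y -> colr r x != colr r y.
Proof.
rewrite /bipartite_component /colr; case: pickP => [c /forallP Hc | H0] /=.
  move=> _ x y cx Uxy; move: (Hc x) => /forallP /(_ y) /implyP; apply; by rewrite cx Uxy.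
by case/existsP => c Hc; rewrite H0 in Hc.
Qed.

Lemma neg_neq (a : F) : a != 0 -> (- a == a) = false.
Proof. move=> a0; apply/negP => /eqP h; move: a0 => /eqP; apply; lra. Qed.

Lemma slap_rank : \rank (kermx (@LapU F n U 1)) =
   #|[set r | (r \in roots U) && bipartite_component U r]|.
Proof.
set S := [set r | _ && _].
pose w (r i : 'I_n) : F := (rt i == r)%:R * (if colr r i == colr r r then 1 else -1).
pose B : 'M[F]_(#|S|, n) := \matrix_(k, i) w (enum_val k) i.
apply: (@rank_ker_sel _ _ _ S B).
- apply/matrixP => k j; rewrite !mxE.
  have := enum_valP k; rewrite inE => /andP[rr bip].
  set r := enum_val k in rr bip *.
  under eq_bigr do rewrite !mxE mulrDr.
  rewrite big_split /= (bigD1 j) //= eqxx mul1r big1 ?addr0; last first.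
    by move=> i /negPf->; rewrite mul0r mulr0.
  rewrite deg_sym mulr_sumr -big_split big1 // => i _.
  case Uij: (U i j); last by rewrite /= !(mulr0, mul0r, mulr0n, oppr0, addr0).
  rewrite /= mul1r !mulr1 /w (U_rt _ _ Uij).
  case: (eqVneq (rt j) r) => [rj|]; last by rewrite !mul0r addr0.
  have cri : connect U r i.
    by apply/(fingraph.rootP csym); rewrite (U_rt _ _ Uij) rj; apply/eqP.
  have := colP _ bip _ _ cri Uij.
  case: (colr r i); case: (colr r j); case: (colr r r); rewrite /= ?mul1r ?mulN1r; try by []; move=> _; by rewrite ?addNr ?addrN.
- move=> k k'; rewrite mxE /w.
  have := enum_valP k'; rewrite inE => /andP[/rt_in -> _].
  rewrite (inj_eq enum_val_inj); case: (eqVneq k' k) => [->|ne]; first by rewrite !eqxx mul1r.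
  by rewrite mul0r.
- move=> v vL vS; apply/matrixP => i x; rewrite (ord1 i) mxE.
  have H := @LapU_ker F n U Usym 1 v (mulr1 1) vL.
  have Hs : forall a b, U a b -> v 0 b = - v 0 a.
    by move=> a b Uab; have := H a b Uab; rewrite mul1r => /eqP; rewrite addr_eq0 => /eqP ->; rewrite opprK.
  set r := rt x.
  have rr : r \in roots U by apply/eqP; exact: root_root.
  have crx : connect U r x by rewrite csym; exact: connect_root.
  have vr : v 0 r = 0.
    case bip: (bipartite_component U r); first by apply: vS; rewrite inE rr bip.
    apply/eqP; apply/negPn/negP => vr0; move/negbT: bip => /negP; apply.
    apply/existsP; exists [ffun a => v 0 a == v 0 r]; apply/forallP => a; apply/forallP => b.
    apply/implyP => /andP[cra Uab]; rewrite !ffunE (Hs _ _ Uab).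
    case: (@path_sign (v 0) Hs _ _ cra) => ->; rewrite ?opprK eqxx neg_neq //.
  by case: (@path_sign (v 0) Hs _ _ crx) => ->; rewrite vr ?oppr0.
Qed.
End Graph.

Import Order.TTheory GRing.Theory Num.Theory.

Lemma lap_eq (R : numFieldType) n (E : rel 'I_n) (t : R) : t ^+ 2 = 1 ->
  deformed_lap (adjmx R E) t = LapU R n (undir_part E) (- t).
Proof.
move=> t2; apply/matrixP => i j; rewrite !mxE.
rewrite /degU /undir_part; under eq_bigr do rewrite !mxE -natrM mulnb.
rewrite -[(\sum_k _) *+ (i == j)]mulr_natl -mulnb natrM.
have t3 : t ^+ 3 = t by rewrite exprS t2 mulr1.
rewrite t3 t2; move: (\sum__ _) ((i == j)%:R) ((E i j)%:R) ((E j i)%:R) => d x a b; ring.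
Qed.

Lemma map_lap (R : numFieldType) n (U : rel 'I_n) (s : rat) :
  map_mx (ratr : rat -> R) (LapU rat n U s) = LapU R n U (ratr s).
Proof.
apply/matrixP => i j; rewrite !mxE rmorphD !rmorphM /= !rmorph_nat /degU rmorph_sum /=.
by under eq_bigr do rewrite rmorph_nat.
Qed.

Lemma lap_tr (F : nzRingType) n (U : rel 'I_n) (s : F) : symmetric U ->
  (LapU F n U s)^T = LapU F n U s.
Proof.
move=> Us; apply/matrixP => i j; rewrite !mxE Us eq_sym.
by case: (eqVneq j i) => [->|]; rewrite ?mul0r.
Qed.

Lemma rank_ker_map (R : numFieldType) n (A : 'M[rat]_n) :
  \rank (kermx (map_mx (ratr : rat -> R) A)^T) = \rank (kermx A^T).
Proof. by rewrite !mxrank_ker map_trmx mxrank_map. Qed.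

Lemma det0_ker (F : fieldType) n (A : 'M[F]_n) :
  \det A = 0 <-> (0 < \rank (kermx A^T))%N.
Proof.
rewrite mxrank_ker mxrank_tr subn_gt0 ltn_neqAle rank_leq_row andbT.
have e : (\rank A == n) = (\det A != 0) by rewrite -unitfE -unitmxE -row_free_unit.
rewrite e negbK; split => [->|/eqP //]; exact: eqxx.
Qed.

Theorem proposition3p5 (R : numFieldType) (n : nat) (E : rel 'I_n) :
  (0 < n)%N ->
  (forall i, ~~ E i i) ->
  let M := deformed_lap (adjmx R E) in
  let U := undir_part E in
  [/\ mxpoly_eigenvalue M 1,
      geom_mult M 1 = num_components U,
      mxpoly_eigenvalue M (-1) <-> (0 < num_bipartite_components U)%N
    & (0 < num_bipartite_components U)%N ->
      geom_mult M (-1) = num_bipartite_components U].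
Proof.
move=> n0 irr M U.
have Us : symmetric U by move=> i j; rewrite /U /undir_part andbC.
have g1 : geom_mult M 1 = num_components U.
  rewrite /geom_mult /M lap_eq ?expr1n //.
  have -> : LapU R n (undir_part E) (-1) = map_mx ratr (LapU rat n U (-1)) by rewrite map_lap rmorphN1.
  rewrite rank_ker_map lap_tr // lap_rank //.
  rewrite /num_components /n_comp_mem; apply: eq_card => r; rewrite !inE /= ?andbT //.
have gm1 : geom_mult M (-1) = num_bipartite_components U.
  rewrite /geom_mult /M lap_eq ?sqrrN ?expr1n // opprK.
  have -> : LapU R n (undir_part E) 1 = map_mx ratr (LapU rat n U 1) by rewrite map_lap rmorph1.
  by rewrite rank_ker_map lap_tr // slap_rank.
split => //.
- rewrite /mxpoly_eigenvalue det0_ker; change (0 < geom_mult M 1)%N; rewrite g1.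
  case: n E irr M U Us g1 gm1 n0 => // n' E irr M U Us _ _ _.
  rewrite /num_components /n_comp_mem; apply/card_gt0P.
  exists (fingraph.root U ord0); rewrite !inE /= andbT; apply/eqP; apply: root_root.
  exact: sym_connect_sym.
- by rewrite /mxpoly_eigenvalue det0_ker; change ((0 < geom_mult M (-1))%N <-> (0 < num_bipartite_components U)%N); rewrite gm1.
Qed.
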